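(* There exist constants $c,C>0$, infinitely many $n$, and for each such $n$ a partial Boolean function $f_n:X_n\rightarrow\{0,1\}$ with $X_n\subseteq\{0,1\}^n$, such that $WUQ(f_n)\le C$ and $WUC(f_n)\ge c\log n$.
   Context: Query model: a classical randomized query algorithm adaptively queries input bits $x_i$ (each query costs one) and outputs a bit; a quantum query algorithm alternates input-independent unitaries with the oracle $O_x:|i,b,z\rangle\mapsto|i,b\oplus x_i,z\rangle$ and measures an output bit. For an algorithm whose minimum over $x\in X$ of the probability of outputting $f(x)$ is $p>1/2$, its bias is $\beta=p-1/2$ and its weakly unbounded cost is (number of queries) $+\log(1/(2\beta))$. $WUQ(f)$ (resp. $WUC(f)$) is the minimum weakly unbounded cost over quantum (resp. classical randomized) algorithms. $\log$ is base 2. *)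

(* Defs.v *)
From Stdlib Require List.
From HB Require Import structures.
From mathcomp Require Import all_boot all_order all_algebra.
From mathcomp Require Import all_classical all_reals all_analysis.
From mathcomp Require Import complex.
Set Implicit Arguments. Unset Strict Implicit. Unset Printing Implicit Defensive.
Import Order.TTheory GRing.Theory Num.Theory.
Local Open Scope ring_scope.

(* Inputs x in {0,1}^n ; a partial Boolean function is a domain
   X : {set input n} together with f : input n -> bool (only its values on X matter). *)
Definition input (n : nat) := {ffun 'I_n -> bool}.

Definition log2 {R : realType} (y : R) : R := ln y / ln 2.

(* minimum over x in X of the success probability (1 is the neutral element;
   success probabilities are <= 1) *)
Definition minsucc {R : realType} n (X : {set input n}) (p : input n -> R) : R :=
  \big[Num.min/1]_(x in X) p x.

Definition wu_cost {R : realType} (T : nat) (p : R) : R :=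
  T%:R + log2 (1 / (2 * (p - 1/2))).

Inductive dtree (n : nat) : Type :=
| Leaf of bool
| Node of 'I_n & dtree n & dtree n.

Fixpoint dt_eval n (t : dtree n) (x : input n) : bool :=
  match t with
  | Leaf b => b
  | Node i t0 t1 => if x i then dt_eval t1 x else dt_eval t0 x
  end.

Fixpoint dt_depth n (t : dtree n) : nat :=
  match t with
  | Leaf _ => 0
  | Node _ t0 t1 => (maxn (dt_depth t0) (dt_depth t1)).+1
  end.

Record ralg (R : realType) (n : nat) := RAlg {
  ra_dist : seq (R * dtree n);
  ra_ge0 : forall p, Stdlib.Lists.List.In p ra_dist -> 0 <= p.1;
  ra_sum1 : \sum_(p <- ra_dist) p.1 = 1 }.

Arguments ra_dist {R n} r.

Definition ra_queries R n (A : ralg R n) : nat := \max_(p <- ra_dist A) dt_depth p.2.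

Definition ra_succ R n (A : ralg R n) (f : input n -> bool) (x : input n) : R :=
  \sum_(p <- ra_dist A) p.1 * (dt_eval p.2 x == f x)%:R.

Definition WUC (R : realType) n (f : input n -> bool) (X : {set input n}) : R :=
  inf [set c : R | exists A : ralg R n,
        1/2 < minsucc X (ra_succ A f) /\ c = wu_cost (ra_queries A) (minsucc X (ra_succ A f))].

(* basis states |i, b, z> with workspace z in 'I_m *)
Definition qbasis (n m : nat) := ('I_n * bool * 'I_m)%type.

Definition qvec (R : realType) (T : finType) := T -> R[i].
Definition qop (R : realType) (T : finType) := T -> T -> R[i].

Definition qapply R (T : finType) (U : qop R T) (v : qvec R T) : qvec R T :=
  fun k => \sum_j U k j * v j.

Definition unitary R (T : finType) (U : qop R T) : Prop :=
  forall i j : T, \sum_k (U k i)^* * U k j = (i == j)%:R.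

Definition normsq (R : realType) (z : R[i]) : R := (complex.Re z) ^+ 2 + (complex.Im z) ^+ 2.

Definition unit_vec R (T : finType) (v : qvec R T) : Prop := \sum_k normsq (v k) = 1.

Definition oracle R n m (x : input n) (v : qvec R (qbasis n m)) : qvec R (qbasis n m) :=
  fun k => v (k.1.1, k.1.2 (+) x k.1.1, k.2).

(* A quantum algorithm with T = size qa_Us queries computes
   U_T O_x ... U_1 O_x U_0 |psi0> and measures the bit register b.
   The input-independent initial state psi0 is an arbitrary unit vector
   (equivalent to starting in a fixed basis state, since U_0 is arbitrary). *)
Record qalg (R : realType) (n : nat) := QAlg {
  qa_m : nat;
  qa_psi0 : qvec R (qbasis n qa_m);
  qa_U0 : qop R (qbasis n qa_m);
  qa_Us : seq (qop R (qbasis n qa_m));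
  qa_psi0_unit : unit_vec qa_psi0;
  qa_U0_unitary : unitary qa_U0;
  qa_Us_unitary : forall U, Stdlib.Lists.List.In U qa_Us -> unitary U }.

Arguments qa_m {R n} q.
Arguments qa_psi0 {R n} q.
Arguments qa_U0 {R n} q.
Arguments qa_Us {R n} q.

Definition qa_final R n (A : qalg R n) (x : input n) : qvec R (qbasis n (qa_m A)) :=
  foldl (fun v U => qapply U (oracle x v)) (qapply (qa_U0 A) (qa_psi0 A)) (qa_Us A).

Arguments qa_final {R n} A x _.

Definition qa_queries R n (A : qalg R n) : nat := size (qa_Us A).

Definition qa_succ R n (A : qalg R n) (f : input n -> bool) (x : input n) : R :=
  \sum_(k : qbasis n (qa_m A) | k.1.2 == f x) normsq (qa_final A x k).

Definition WUQ (R : realType) n (f : input n -> bool) (X : {set input n}) : R :=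
  inf [set c : R | exists A : qalg R n,
        1/2 < minsucc X (qa_succ A f) /\ c = wu_cost (qa_queries A) (minsucc X (qa_succ A f))].

Arguments WUC {R n} f X.
Arguments WUQ {R n} f X.

(* Main.v *)
Require Import Defs.
From HB Require Import structures.
From mathcomp Require Import all_boot all_order all_algebra.
From mathcomp Require Import all_classical all_reals all_analysis.
From mathcomp Require Import complex.
From mathcomp Require Import lra ring.
Import Order.TTheory GRing.Theory Num.Theory.
Set Implicit Arguments. Unset Strict Implicit. Unset Printing Implicit Defensive.
Local Open Scope ring_scope.

Section Bits.
Variable m : nat.
Definition BF := {ffun 'I_m -> bool}.
Definition dot (u v : BF) : bool := \big[addb/false]_j (u j && v j).
Definition xorf (u v : BF) : BF := [ffun j => u j (+) v j].
Definition zf : BF := [ffun=> false].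

Lemma dotC u v : dot u v = dot v u.
Proof. by apply: eq_bigr => j _; rewrite andbC. Qed.

Lemma dotDl u w v : dot (xorf u w) v = dot u v (+) dot w v.
Proof.
rewrite /dot -big_split /=; apply: eq_bigr => j _.
by rewrite ffunE andb_addl.
Qed.

Lemma dot0l v : dot zf v = false.
Proof. by rewrite /dot big1 // => j _; rewrite ffunE. Qed.

Lemma dot_unit u j : dot u [ffun k => k == j] = u j.
Proof.
rewrite /dot (bigD1 j) //= big1 ?addbF; first by rewrite ffunE eqxx andbT.
by move=> k /negbTE kj; rewrite ffunE kj andbF.
Qed.

Lemma xorfK v e : xorf (xorf v e) e = v.
Proof. by apply/ffunP => j; rewrite !ffunE -addbA addbb addbF. Qed.

Lemma xorf_eq0 u v : (xorf u v == zf) = (v == u).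
Proof.
apply/eqP/eqP => [h|->].
  apply/ffunP => j; have := congr1 (fun f : BF => f j) h.
  by rewrite !ffunE; case: (u j); case: (v j).
by apply/ffunP => j; rewrite !ffunE addbb.
Qed.

Lemma card_BF : #|{: BF}| = (2 ^ m)%N.
Proof. by rewrite card_ffun card_bool card_ord. Qed.

Variable R : realType.
Definition sgn (b : bool) : R := if b then -1 else 1.
Lemma sgnD a b : sgn (a (+) b) = sgn a * sgn b.
Proof. by case: a; case: b; rewrite /sgn /= ?mulN1r ?mul1r ?opprK. Qed.

Lemma sum_sgn_dot (w : BF) :
  \sum_(v : BF) sgn (dot w v) = if w == zf then (2 ^ m)%:R else 0.
Proof.
case: eqP => [->|/eqP wn0].
  under eq_bigr do rewrite dot0l.
  by rewrite sumr_const card_BF /sgn.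
have [j wj] : exists j, w j.
  apply/existsP; apply: contraR wn0 => /existsPn h.
  by apply/eqP/ffunP => j; rewrite ffunE; apply/negbTE/h.
set e : BF := [ffun k => k == j].
have inj : injective (xorf^~ e) by move=> a b /(congr1 (xorf^~ e)); rewrite !xorfK.
have H := reindex_inj (op := +%R) (x := 0) (P := xpredT) (F := fun v => sgn (dot w v)) inj.
move: H; under [X in _ = X -> _]eq_bigr do
  rewrite dotC dotDl sgnD dotC [dot e w]dotC dot_unit wj mulrN1.
rewrite sumrN => H; lra.
Qed.
End Bits.
Section Pairs.
Variable m : nat.
Definition SS := (BF m * BF m)%type.
Definition dot2 (u v : SS) : bool := dot u.1 v.1 (+) dot u.2 v.2.
Definition xor2 (u v : SS) : SS := (xorf u.1 v.1, xorf u.2 v.2).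
Definition zS : SS := (zf m, zf m).
Definition gS (s : SS) : bool := dot s.1 s.2.

Lemma dot2Dl u w v : dot2 (xor2 u w) v = dot2 u v (+) dot2 w v.
Proof.
rewrite /dot2 /= !dotDl; case: (dot u.1 v.1); case: (dot u.2 v.2);
  case: (dot w.1 v.1); case: (dot w.2 v.2).
all: by [].
Qed.

Lemma dot2C u v : dot2 u v = dot2 v u.
Proof. by rewrite /dot2 dotC [dot u.2 _]dotC. Qed.

Variable R : realType.

Lemma sum_sgn_dot2 (w : SS) :
  \sum_(v : SS) sgn R (dot2 w v) = if w == zS then ((2 ^ m) * (2 ^ m))%:R else 0.
Proof.
rewrite -(pair_bigA _ (fun a b => sgn R (dot2 w (a, b)))) /=.
under eq_bigr do under eq_bigr do rewrite /dot2 /= sgnD.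
rewrite -big_distrlr /= !sum_sgn_dot.
case: w => w1 w2; rewrite /zS xpair_eqE.
by case: eqP; case: eqP => //= _ _; rewrite ?mulr0 ?mul0r // natrM.
Qed.

Lemma ghat (u : SS) :
  \sum_(s : SS) sgn R (dot2 u s) * sgn R (gS s) = sgn R (dot u.1 u.2) * (2 ^ m)%:R.
Proof.
rewrite -(pair_bigA _ (fun a b => sgn R (dot2 u (a, b)) * sgn R (gS (a, b)))) /=.
have E a : \sum_(b : BF m) sgn R (dot2 u (a, b)) * sgn R (gS (a, b))
    = sgn R (dot u.1 a) * (if a == u.2 then (2 ^ m)%:R else 0).
  under eq_bigr do rewrite /dot2 /gS /= sgnD -mulrA -sgnD -dotDl.
  by rewrite -big_distrr /= sum_sgn_dot xorf_eq0.
under eq_bigr do rewrite E.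
rewrite (bigD1 u.2) //= eqxx big1 ?addr0 //.
by move=> a /negbTE ->; rewrite mulr0.
Qed.

Lemma ghat_abs (u : SS) :
  `|\sum_(s : SS) sgn R (dot2 u s) * sgn R (gS s)| = (2 ^ m)%:R.
Proof. by rewrite ghat normrM /sgn; case: dot; rewrite ?normrN normr1 mul1r normr_nat. Qed.

End Pairs.
Section Classical.
Variable m : nat.
Variable R : realType.
Definition nS := #|{: SS m}|.
Definition dec (i : 'I_nS) : SS m := enum_val i.
Definition xs (s : SS m) : input nS := [ffun i => dot2 (dec i) s].
Definition chi (u s : SS m) : R := sgn R (dot2 u s).
Definition phi (l : seq (R * SS m)) (s : SS m) : R := \sum_(p <- l) p.1 * chi p.2 s.
Definition nu (l : seq (R * SS m)) : R := \sum_(p <- l) `|p.1|.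
Definition lsplit (e : R) (w : SS m) (l : seq (R * SS m)) :=
  [seq (p.1 / 2, p.2) | p <- l] ++ [seq (e * (p.1 / 2), xor2 w p.2) | p <- l].

Lemma chi_xor w u s : chi (xor2 w u) s = chi w s * chi u s.
Proof. by rewrite /chi dot2Dl sgnD. Qed.

Lemma phi_split e w l s : phi (lsplit e w l) s = phi l s * ((1 + e * chi w s) / 2).
Proof.
rewrite /phi /lsplit big_cat !big_map /= -big_split /= big_distrl /=.
by apply: eq_bigr => p _; rewrite chi_xor; ring.
Qed.

Lemma nu_split e w l : `|e| = 1 -> nu (lsplit e w l) = nu l.
Proof.
move=> he; rewrite /nu /lsplit big_cat !big_map /= -big_split /=.
apply: eq_bigr => p _ /=; rewrite !normrM he mul1r.
by rewrite normfV normr_nat; field.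
Qed.

Let M : R := (2 ^ m)%:R.

Lemma tree_bound (t : dtree nS) (l : seq (R * SS m)) :
  `|\sum_(s : SS m) phi l s * sgn R (dt_eval t (xs s) (+) gS s)|
    <= 2 ^+ (dt_depth t) * M * nu l.
Proof.
elim: t l => [b|i t0 IH0 t1 IH1] l /=.
  have -> : \sum_(s : SS m) phi l s * sgn R (b (+) gS s)
      = \sum_(p <- l) (sgn R b * p.1) * \sum_(s : SS m) chi p.2 s * sgn R (gS s).
    under eq_bigr do rewrite /phi big_distrl /=.
    rewrite exchange_big /=; apply: eq_bigr => p _.
    by rewrite big_distrr /=; apply: eq_bigr => s _; rewrite sgnD mulrACA [p.1 * _]mulrC.
  rewrite expr0 mul1r /nu big_distrr /=.
  apply: le_trans (ler_norm_sum _ _ _) _; apply: ler_sum => p _.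
  rewrite normrM ghat_abs normrM /sgn; case: b; rewrite ?normrN normr1 mul1r mulrC //.
have E s : phi l s * sgn R (dt_eval (Node i t0 t1) (xs s) (+) gS s)
   = phi (lsplit 1 (dec i) l) s * sgn R (dt_eval t0 (xs s) (+) gS s)
   + phi (lsplit (-1) (dec i) l) s * sgn R (dt_eval t1 (xs s) (+) gS s).
  rewrite !phi_split /= ffunE /chi.
  by case: (dot2 (dec i) s); rewrite /sgn /=; field.
under eq_bigr do rewrite E.
rewrite big_split /=.
apply: le_trans (ler_normD _ _) _.
have h1 : `|(1 : R)| = 1 by rewrite normr1.
have h2 : `|(-1 : R)| = 1 by rewrite normrN normr1.
apply: le_trans (lerD (IH0 _) (IH1 _)) _.
rewrite !nu_split // exprS.
have n0 : 0 <= nu l by rewrite /nu; apply: sumr_ge0 => p _; exact: normr_ge0.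
have M0 : 0 <= M by rewrite /M ler0n.
have two1 : (1 : R) <= 2 by rewrite ler1n.
have a0 : (2 : R) ^+ dt_depth t0 <= 2 ^+ maxn (dt_depth t0) (dt_depth t1).
  exact: (ler_weXn2l two1 (leq_maxl _ _)).
have a1 : (2 : R) ^+ dt_depth t1 <= 2 ^+ maxn (dt_depth t0) (dt_depth t1).
  exact: (ler_weXn2l two1 (leq_maxr _ _)).
have Mn : 0 <= M * nu l by exact: mulr_ge0.
rewrite -!mulrA; set X := M * nu l in Mn *.
apply: le_trans (lerD (ler_wpM2r Mn a0) (ler_wpM2r Mn a1)) _.
by rewrite -[2]/(1+1) mulrDl mul1r.
Qed.
End Classical.
Lemma log_bound (R : realType) (M b : R) (Q : nat) : 0 < M -> 0 < b ->
  b <= 2 ^+ Q / (2 * M) -> log2 M <= Q%:R + log2 (1 / (2 * b)).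
Proof.
move=> M0 b0 hb.
have two0 : (0 : R) < 2 by rewrite ltr0n.
have two1 : (1 : R) < 2 by rewrite ltr1n.
have P0 : (0 : R) < 2 ^+ Q by apply: exprn_gt0.
have l2 : (0 : R) < ln 2 by apply: ln_gt0.
have M20 : 0 < 2 * M by lra.
have b20 : 0 < 2 * b by lra.
have hb' : b * (2 * M) <= 2 ^+ Q by rewrite -ler_pdivlMr.
have key : M / 2 ^+ Q <= 1 / (2 * b).
  rewrite ler_pdivrMr // mul1r mulrC ler_pdivlMr //.
  have -> : M * (2 * b) = b * (2 * M) by ring.
  exact: hb'.
have lnle : ln (M / 2 ^+ Q) <= ln (1 / (2 * b)).
  rewrite ler_ln // ?posrE ?divr_gt0 //; lra.
rewrite ln_div ?posrE // lnXn // in lnle.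
rewrite /log2.
have -> : Q%:R + ln (1 / (2 * b)) / ln 2 = (Q%:R * ln 2 + ln (1 / (2 * b))) / ln 2.
  by field; lra.
apply: ler_wpM2r; first by rewrite invr_ge0; lra.
rewrite -[ln 2 *+ Q]mulr_natl in lnle; lra.
Qed.
Section Build.
Variable n : nat.
Definition upd (y : input n) (i : 'I_n) (b : bool) : input n :=
  [ffun j => if j == i then b else y j].
Definition ov (l : seq 'I_n) (x : input n) : input n :=
  [ffun j => if j \in l then x j else false].
Fixpoint build (l : seq 'I_n) (h : input n -> bool) : dtree n :=
  match l with
  | [::] => Leaf n (h [ffun=> false])
  | i :: l' => Node i (build l' (fun y => h (upd y i false))) (build l' (fun y => h (upd y i true)))
  end.

Lemma build_eval l h x : dt_eval (build l h) x = h (ov l x).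
Proof.
elim: l h => [|i l IH] h /=.
  by congr h; apply/ffunP => j; rewrite !ffunE.
rewrite !IH.
have E : upd (ov l x) i (x i) = ov (i :: l) x.
  apply/ffunP => j; rewrite !ffunE in_cons.
  by case: eqP => [->|]. 
by case: (boolP (x i)) => xi; rewrite -E ?(negbTE xi) ?xi.
Qed.

Lemma build_all h x : dt_eval (build (enum 'I_n) h) x = h x.
Proof. by rewrite build_eval; congr h; apply/ffunP => j; rewrite ffunE mem_enum. Qed.
End Build.

Lemma wsum_le (R : realType) (T : Type) (l : seq (R * T)) (F : R * T -> R) (B : R) :
  (forall p, List.In p l -> 0 <= p.1) ->
  (forall p, List.In p l -> F p <= B) ->
  \sum_(p <- l) p.1 * F p <= \sum_(p <- l) p.1 * B.
Proof.
elim: l => [|a l IH] h0 hF; first by rewrite !big_nil.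
rewrite !big_cons; apply: lerD.
  by apply: ler_wpM2l; [apply: h0; left | apply: hF; left].
by apply: IH => p hp; [apply: h0 | apply: hF]; right.
Qed.

Lemma depth_le_max n (R : realType) (l : seq (R * dtree n)) p :
  List.In p l -> (dt_depth p.2 <= \max_(q <- l) dt_depth q.2)%N.
Proof.
elim: l => [|a l IH] //= [->|hp]; rewrite big_cons.
  exact: leq_maxl.
exact: leq_trans (IH hp) (leq_maxr _ _).
Qed.
Lemma half_lt1 (R : realType) : (1/2 : R) < 1.
Proof. lra. Qed.

Lemma final_arith (R : realType) (p M P : R) : 0 < M ->
  p * (M * M) <= M * M / 2 + P * M / 2 -> (p - 1/2) * (2 * M) <= P.
Proof.
move=> M0 h; rewrite -(ler_pM2r M0).
have -> : (p - 1/2) * (2 * M) * M = 2 * (p * (M * M)) - M * M by field.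
have -> : P * M = 2 * (P * M / 2) by field.
move: h; generalize (p * (M * M)) (M * M) (P * M) => a b c; lra.
Qed.

Section ClassicalMain.
Variable m : nat.
Variable R : realType.
Definition XS : {set input (nS m)} := [set xs s | s : SS m].
Definition fS (x : input (nS m)) : bool := [exists s, (x == xs s) && gS s].
Let M : R := (2 ^ m)%:R.

Lemma xs_inj : injective (@xs m).
Proof.
move=> s s' h.
have hv v : dot2 s v = dot2 s' v.
  have := congr1 (fun x : input (nS m) => x (enum_rank v)) h.
  by rewrite !ffunE /dec enum_rankK dot2C [dot2 s' _]dot2C.
have hz : xor2 s s' == zS m.
  have := sum_sgn_dot2 R (xor2 s s').
  under eq_bigr do rewrite dot2Dl hv addbb.
  rewrite sumr_const /sgn; case: eqP => // _ /eqP.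
  by rewrite pnatr_eq0 card_prod card_BF muln_eq0 expn_eq0.
case: s s' {h hv} hz => [a b] [c d]; rewrite /zS /xor2 /= xpair_eqE !xorf_eq0.
by case/andP => /eqP -> /eqP ->.
Qed.

Lemma fS_xs s : fS (xs s) = gS s.
Proof.
apply/existsP/idP => [[s' /andP [/eqP h g']]|gs]; last by exists s; rewrite eqxx.
by rewrite (xs_inj h).
Qed.

Lemma nS_val : (nS m)%:R = M * M :> R.
Proof. by rewrite /nS card_prod card_BF natrM. Qed.

Lemma M_gt0 : 0 < M.
Proof. by rewrite /M ltr0n expn_gt0. Qed.

Lemma classical_bound (A : ralg R (nS m)) :
  1/2 < minsucc XS (ra_succ A fS) ->
  log2 M <= wu_cost (ra_queries A) (minsucc XS (ra_succ A fS)).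
Proof.
set p := minsucc _ _; set Q := ra_queries A => hp.
have hps s : p <= ra_succ A fS (xs s).
  by apply: bigmin_le_cond; apply: imset_f.
have eqs s : ra_succ A fS (xs s)
    = \sum_(q <- ra_dist A) q.1 * ((1 + sgn R (dt_eval q.2 (xs s) (+) gS s)) / 2).
  rewrite /ra_succ fS_xs; apply: eq_bigr => q _; congr (_ * _).
  by case: (dt_eval _ _); case: (gS s); rewrite /sgn /=; field.
have hG q : List.In q (ra_dist A) ->
    \sum_(s : SS m) ((1 + sgn R (dt_eval q.2 (xs s) (+) gS s)) / 2)
      <= (nS m)%:R / 2 + 2 ^+ Q * M / 2.
  move=> hq.
  have tb := @tree_bound m R q.2 [:: (1, zS m)].
  have nu1 : nu [:: (1 : R, zS m)] = 1 by rewrite /nu big_cons big_nil normr1 addr0.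
  rewrite nu1 in tb.
  have phi1 s : phi [:: (1 : R, zS m)] s = 1.
    by rewrite /phi big_cons big_nil /= /chi /dot2 !dot0l /= mul1r addr0.
  move: tb; under eq_bigr do rewrite phi1 mul1r.
  move=> tb.
  have dq : (2 : R) ^+ dt_depth q.2 <= 2 ^+ Q.
    have two1 : (1 : R) <= 2 by rewrite ler1n.
    by apply: (ler_weXn2l two1 (depth_le_max hq)).
  rewrite -big_distrl /= big_split /= sumr_const.
  set S := \sum_(s : SS m) _ in tb *.
  have : S <= 2 ^+ Q * M.
    apply: le_trans (ler_norm _) _; apply: le_trans tb _.
    by rewrite mulr1; apply: ler_wpM2r => //; apply: ltW; exact: M_gt0.
  move=> hS; rewrite mulrDl; apply: lerD; first by [].
  by apply: ler_wpM2r => //; rewrite invr_ge0 ler0n.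
have hsum : \sum_(s : SS m) ra_succ A fS (xs s) <= (nS m)%:R / 2 + 2 ^+ Q * M / 2.
  under eq_bigr do rewrite eqs.
  rewrite exchange_big /=.
  under eq_bigr do rewrite -big_distrr /=.
  have := wsum_le (@ra_ge0 R (nS m) A) hG.
  by rewrite -big_distrl /= ra_sum1 mul1r.
have hlow : p * (nS m)%:R <= \sum_(s : SS m) ra_succ A fS (xs s).
  rewrite mulr_natr.
  apply: le_trans (ler_sum _ (fun s _ => hps s)).
  by rewrite sumr_const.
have M0 := M_gt0.
rewrite nS_val in hsum hlow.
apply: log_bound => //; first by rewrite subr_gt0.
have M20 : 0 < 2 * M by rewrite mulr_gt0 // ltr0n.
rewrite ler_pdivlMr //; apply: final_arith => //.
exact: le_trans hlow hsum.
Qed.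

Lemma WUC_bound : (1/2) * log2 ((nS m)%:R : R) <= WUC fS XS.
Proof.
have -> : (1/2) * log2 ((nS m)%:R : R) = log2 M.
  rewrite nS_val /log2 lnM ?posrE ?M_gt0 //; field.
  have : (0 : R) < ln 2 by apply: ln_gt0; rewrite ltr1n.
  by move=> h; apply/eqP => h'; rewrite h' ltxx in h.
apply: lb_le_inf; last first.
  by move=> c [A [hA ->]]; exact: classical_bound.
pose t := build (enum 'I_(nS m)) fS.
have ge0 : forall q, List.In q [:: (1 : R, t)] -> 0 <= q.1.
  by move=> q [<-|//]; rewrite ler01.
have s1 : \sum_(q <- [:: (1 : R, t)]) q.1 = 1 by rewrite big_cons big_nil addr0.
pose A := RAlg ge0 s1.
have ms : minsucc XS (ra_succ A fS) = 1.
  apply: bigmin_eq_id => x _.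
  by rewrite /ra_succ big_cons big_nil /= build_all eqxx mulr1 addr0.
exists (wu_cost (ra_queries A) (minsucc XS (ra_succ A fS))), A; split => //.
rewrite ms; exact: half_lt1.
Qed.
End ClassicalMain.
Lemma conj_realC (R : realType) (x : R) : ((x%:C)%C^*)%R = (x%:C)%C.
Proof. exact: conjc_real. Qed.

Lemma normsq_real (R : realType) (x : R) : normsq ((x%:C)%C) = x ^+ 2.
Proof. by rewrite /normsq /= expr0n /= addr0. Qed.

Lemma sum_dec m (R : realType) (F : SS m -> R) :
  \sum_(i : 'I_(nS m)) F (dec i) = \sum_(v : SS m) F v.
Proof. rewrite /dec -big_enum_val; by apply: eq_bigl. Qed.

Lemma xor2_eq0 m (x y : SS m) : (xor2 x y == zS m) = (x == y).
Proof.
case: x y => [a b] [c d]; rewrite /xor2 /zS /= !xpair_eqE !xorf_eq0.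
by rewrite [c == a]eq_sym [d == b]eq_sym.
Qed.

Section Quantum.
Variable m : nat.
Variable R : realType.
Local Notation n := (nS m).
Definition qB := qbasis n 1.
Definition amp : R := (Num.sqrt (2 * n%:R))^-1.

Lemma n_gt0 : (0 : R) < n%:R.
Proof. by rewrite nS_val; apply: mulr_gt0; exact: M_gt0. Qed.

Lemma amp2 : amp * amp * (2 * n%:R) = 1.
Proof.
have h : (0 : R) < 2 * n%:R by apply: mulr_gt0; [rewrite ltr0n | exact: n_gt0].
rewrite /amp -invfM -expr2 sqr_sqrtr ?ltW // mulVf //.
by apply/eqP => h0; rewrite h0 ltxx in h.
Qed.

Lemma chiC (u v : SS m) : chi R u v = chi R v u.
Proof. by rewrite /chi dot2C. Qed.

Lemma chi_orth (x y : SS m) :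
  \sum_(i : 'I_n) chi R (dec i) x * chi R (dec i) y = if x == y then n%:R else 0.
Proof.
rewrite (sum_dec (fun v => chi R v x * chi R v y)).
under eq_bigr do rewrite /chi -sgnD [dot2 _ x]dot2C [dot2 _ y]dot2C -dot2Dl.
by rewrite sum_sgn_dot2 xor2_eq0 nS_val natrM.
Qed.

Lemma sum_qB (F : qB -> R) :
  \sum_(k : qB) F k = \sum_(i : 'I_n) \sum_(b : bool) F ((i, b), ord0).
Proof.
have -> : \sum_(k : qB) F k = \sum_(k : qB) F (k.1, k.2) by apply: eq_bigr => -[].
rewrite -(pair_bigA _ (fun x z => F (x, z))) /=.
under eq_bigr do rewrite big_ord1.
have -> : \sum_(x : 'I_n * bool) F (x, ord0) = \sum_(x : 'I_n * bool) F ((x.1, x.2), ord0).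
  by apply: eq_bigr => -[].
by rewrite -(pair_bigA _ (fun i b => F ((i, b), ord0))).
Qed.

Lemma unitary_real (u : qB -> qB -> R) :
  (forall i j, \sum_k u k i * u k j = (i == j)%:R) ->
  unitary (fun k j => (u k j)%:C)%C.
Proof.
move=> h i j.
under eq_bigr do rewrite conj_realC -rmorphM.
by rewrite -rmorph_sum h rmorph_nat.
Qed.

Definition idr (k j : qB) : R := (k == j)%:R.

Lemma idr_orth i j : \sum_k idr k i * idr k j = (i == j)%:R.
Proof.
rewrite (bigD1 i) //= big1 ?addr0 /idr ?eqxx ?mul1r //.
by move=> k /negbTE ->; rewrite mul0r.
Qed.

Definition ur (k j : qB) : R :=
  amp * chi R (dec k.1.1) (dec j.1.1) *
  (if k.1.2 == gS (dec k.1.1) then sgn R j.1.2 else 1).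

Lemma sum_alpha (t c c' : bool) :
  \sum_(b : bool) (if b == t then sgn R c else 1) * (if b == t then sgn R c' else 1)
  = if c == c' then 2 else 0.
Proof.
rewrite big_bool; case: t; case: c; case: c' => /=; rewrite /sgn; lra.
Qed.

Lemma ur_orth a a' : \sum_k ur k a * ur k a' = (a == a')%:R.
Proof.
rewrite sum_qB.
have E i : \sum_(b : bool) ur ((i, b), ord0) a * ur ((i, b), ord0) a'
  = amp * amp * (chi R (dec i) (dec a.1.1) * chi R (dec i) (dec a'.1.1))
    * (if a.1.2 == a'.1.2 then 2 else 0).
  rewrite -(sum_alpha (gS (dec i)) a.1.2 a'.1.2) big_distrr /=; apply: eq_bigr => b _.
  rewrite /ur /=; ring.
under eq_bigr do rewrite E.
rewrite -big_distrl -big_distrr /= chi_orth; clear E.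
case: a a' => [[i c] z] [[i' c'] z']; rewrite /= (ord1 z) (ord1 z') !xpair_eqE eqxx andbT.
have -> : (dec i == dec i') = (i == i').
  by apply/eqP/eqP => [/enum_val_inj|->].
case: (i == i'); case: (c == c') => /=; rewrite ?mulr0 ?mul0r //.
by rewrite -[RHS]amp2; ring.
Qed.
End Quantum.
Section QAlgo.
Variable m : nat.
Variable R : realType.
Local Notation n := (nS m).

Definition psi0r (k : qB m) : R := sgn R k.1.2 * amp m R.

Lemma psi0_unit : unit_vec (fun k : qB m => (psi0r k)%:C)%C.
Proof.
rewrite /unit_vec.
under eq_bigr do rewrite normsq_real.
rewrite sum_qB.
under eq_bigr do rewrite big_bool /psi0r /sgn /=.
have -> : \sum_(i : 'I_n) ((-1 * amp m R) ^+ 2 + (1 * amp m R) ^+ 2)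
   = \sum_(i : 'I_n) (amp m R * amp m R * 2) by apply: eq_bigr => i _; ring.
rewrite sumr_const card_ord.
have -> : (amp m R * amp m R * 2) *+ n = amp m R * amp m R * 2 * n%:R by exact: (esym (mulr_natr _ _)).
by rewrite -[RHS](amp2 m R); ring.
Qed.

Definition U0c : qop R (qB m) := (fun k j => (idr R k j)%:C)%C.
Definition Uc : qop R (qB m) := (fun k j => (ur R k j)%:C)%C.

Lemma U0c_unitary : unitary U0c.
Proof. apply: unitary_real; exact: idr_orth. Qed.

Lemma Uc_unitary : unitary Uc.
Proof. apply: unitary_real; exact: ur_orth. Qed.

Lemma Us_unitary : forall U, List.In U [:: Uc] -> unitary U.
Proof. by move=> U [<-|//]; exact: Uc_unitary. Qed.

Definition QA : qalg R n := QAlg psi0_unit U0c_unitary Us_unitary.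

Definition finr (s : SS m) (k : qB m) : R := ((dec k.1.1 == s) && (k.1.2 == gS s))%:R.

Lemma qapply_U0 : qapply U0c (fun k : qB m => (psi0r k)%:C)%C = (fun k => (psi0r k)%:C)%C.
Proof.
apply: funext => k; rewrite /qapply /U0c.
under eq_bigr do rewrite -rmorphM.
rewrite -rmorph_sum; congr (_%:C)%C.
rewrite (bigD1 k) //= big1 ?addr0 /idr ?eqxx ?mul1r //.
by move=> j /negbTE; rewrite eq_sym => ->; rewrite mul0r.
Qed.

Lemma sum_sgn2 (t : bool) : 
  \sum_(b : bool) (if t then sgn R b else 1) * sgn R b = if t then 2 else 0.
Proof. by rewrite big_bool; case: t; rewrite /sgn /=; lra. Qed.

Lemma final_xs s k : qa_final QA (xs s) k = (finr s k)%:C%C.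
Proof.
rewrite /qa_final /= qapply_U0 /qapply /Uc /oracle.
under eq_bigr do rewrite -rmorphM.
rewrite -rmorph_sum; congr (_%:C)%C.
rewrite sum_qB.
have E i : \sum_(b : bool) ur R k ((i, b), ord0) * psi0r ((((i, b), ord0).1.1, ((i, b), ord0).1.2 (+) xs s ((i, b), ord0).1.1), ((i, b), ord0).2)
   = amp m R * amp m R * (chi R (dec i) (dec k.1.1) * chi R (dec i) s)
     * (if k.1.2 == gS (dec k.1.1) then 2 else 0).
  rewrite -(sum_sgn2 (k.1.2 == gS (dec k.1.1))) mulr_sumr.
  apply: eq_bigr => b _; rewrite /ur /psi0r /= ffunE sgnD /chi /= [dot2 (dec k.1.1) _]dot2C.
  by case: (k.1.2 == _); ring.
under eq_bigr do rewrite E.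
rewrite -big_distrl -big_distrr /= chi_orth; clear E.
rewrite /finr; case: eqP => [->|_]; last by rewrite !mulr0 mul0r.
case: (k.1.2 == gS s) => /=; last by rewrite mulr0.
by rewrite -[RHS](amp2 m R); ring.
Qed.

Lemma qsucc_xs (s : SS m) : qa_succ QA (@fS m) (xs s) = 1.
Proof.
rewrite /qa_succ (fS_xs R).
under eq_bigr do rewrite final_xs normsq_real.
rewrite big_mkcond /= sum_qB.
have E i : \sum_(b : bool) (if b == gS s then finr s ((i, b), ord0) ^+ 2 else 0)
  = (dec i == s)%:R.
  rewrite big_bool /finr /=; case: (gS s); case: (dec i == s) => /=;
  by rewrite ?expr1n ?expr0n ?addr0 ?add0r.
under eq_bigr do rewrite E.
rewrite (sum_dec (fun v => (v == s)%:R)).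
rewrite (bigD1 s) //= eqxx big1 ?addr0 //.
by move=> v /negbTE ->.
Qed.

Lemma minsucc_le1 k (X : {set input k}) (p : input k -> R) : minsucc X p <= 1.
Proof. exact: bigmin_le_id. Qed.

Lemma wu_cost_ge0 T (p : R) : 1/2 < p -> p <= 1 -> 0 <= wu_cost T p.
Proof.
move=> h1 h2; rewrite /wu_cost; apply: addr_ge0; first exact: ler0n.
rewrite /log2; apply: divr_ge0; last first.
  by apply: ltW; apply: ln_gt0; rewrite ltr1n.
apply: ln_ge0.
have h : 0 < 2 * (p - 1/2) by move: h1; clear; lra.
rewrite ler_pdivlMr // mul1r.
by move: h2; clear; lra.
Qed.

Lemma WUQ_bound : WUQ (R := R) (@fS m) (XS m) <= 1.
Proof.
have ms : minsucc (XS m) (qa_succ QA (@fS m)) = 1.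
  apply: bigmin_eq_id => x /imsetP [s _ ->].
  by rewrite qsucc_xs.
have hlb : has_lbound [set c : R | exists A : qalg R n,
        1/2 < minsucc (XS m) (qa_succ A (@fS m)) /\ c = wu_cost (qa_queries A) (minsucc (XS m) (qa_succ A (@fS m)))].
  exists 0 => c [A [hA ->]]; apply: wu_cost_ge0 => //; exact: minsucc_le1.
have mem : exists A : qalg R n,
        1/2 < minsucc (XS m) (qa_succ A (@fS m)) /\ wu_cost (qa_queries QA) (minsucc (XS m) (qa_succ QA (@fS m))) = wu_cost (qa_queries A) (minsucc (XS m) (qa_succ A (@fS m))).
  by exists QA; split => //; rewrite ms; exact: half_lt1.
have := ge_inf hlb mem.
rewrite ms /wu_cost /= /log2.
have -> : (1 : R) / (2 * (1 - 1/2)) = 1 by field.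
by rewrite ln1 mul0r addr0.
Qed.
End QAlgo.
Unset Implicit Arguments.

Theorem lemma8 (R : realType) :
  exists c C : R, 0 < c /\ 0 < C /\
    forall N : nat, exists n : nat, (N < n)%N /\
      exists (X : {set input n}) (f : input n -> bool),
        WUQ f X <= C /\ c * log2 (n%:R : R) <= WUC f X.
Proof.
exists (1/2), 1; split; first by rewrite divr_gt0 ?ltr0n.
split; first exact: ltr01.
move=> N; exists (nS N); split.
  rewrite /nS card_prod card_BF.
  apply: leq_trans (ltn_expl N (ltnSn 1)) _.
  by rewrite leq_pmulr // expn_gt0.
exists (XS N), (@fS N); split.
  exact: WUQ_bound.
exact: WUC_bound.
Qed.
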